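(* Let $P$ be an optimal planning problem whose optimal cost $C^*$ is attained by a feasible solution, let $\epsilon>0$, and let $A$ be a complete planner for feasible kinodynamic planning problems. Consider the procedure Bounded-Suboptimal$(P,\epsilon,A)$: run $A$ on $P_\infty$ to obtain a path $y_0$ and set $c_0=C(y_0)$; then for $i=1,2,\dots$, run $A$ on $P_{c_{i-1}-\epsilon}$; if it reports that no solution exists, stop; otherwise let $y_i$ be the returned solution and $c_i=C(y_i)$. Then this procedure terminates in finite time, and the last path $y_i$ it found has cost $C(y_i)\le C^*+\epsilon$.
   Context: A feasible kinodynamic planning problem asks for $S\ge0$, a trajectory $y:[0,S]\to X$ and control $u:[0,S]\to U$ with $y(0)=x_I$, $y(S)\in G$, $y(s)\in F$, $u(s)\in B(y(s))$, $y'(s)=D(y(s),u(s))$ for all $s$. An optimal planning problem $P$ additionally specifies an incremental cost $L$ and terminal cost $\Phi$ and minimizes $C(y)=\int_0^S L(y(s),u(s))ds+\Phi(y(S))$ over feasible solutions; $C^*$ is the minimum. For $\bar c\in\mathbb{R}\cup\{\infty\}$, $P_{\bar c}$ denotes the feasible kinodynamic problem (in the state-cost space $X\times\mathbb{R}$, with augmented state $(x,c)$, start $(x_I,0)$, dynamics $x'=D(x,u)$, $c'=L(x,u)$, and goal $\{(x,c): x\in G,\ c+\Phi(x)\le\bar c\}$) whose solutions are exactly the feasible trajectories of $P$ with cost $C(y)\le\bar c$; $P_\infty$ has goal $G$ with no cost bound. A planner $A$ is complete if on every feasible planning problem it terminates in finite time, returning a solution if one exists and reporting failure otherwise. *)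

(* Defs.v *)
From HB Require Import structures.
From mathcomp Require Import all_boot all_order all_algebra.
From mathcomp Require Import all_classical all_reals all_analysis.
Set Implicit Arguments. Unset Strict Implicit. Unset Printing Implicit Defensive.
Import Order.TTheory GRing.Theory Num.Theory.
Import numFieldNormedType.Exports.
Local Open Scope classical_set_scope.
Local Open Scope ring_scope.

Section Planning.
Variables (R : realType) (X : normedModType R) (U : Type).

Record opt_problem := OptProblem {
  x_I : X;
  goalG : set X;
  freeF : set X;
  admB : X -> set U;
  dynD : X -> U -> X;
  costL : X -> U -> R;
  termPhi : X -> R
}.

Record traj := Traj { dur : R; path : R -> X; ctl : R -> U }.

Definition integrand (P : opt_problem) (t : traj) : R -> R :=
  fun s => costL P (path t s) (ctl t s).

(* Feasible kinodynamic solution of P (cost functional well defined, i.e.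
   the integrand is Lebesgue integrable on [0,S]). *)
Definition feasible (P : opt_problem) (t : traj) : Prop :=
  [/\ 0 <= dur t,
      path t 0 = x_I P,
      goalG P (path t (dur t)),
      (forall s, 0 <= s <= dur t ->
         [/\ freeF P (path t s),
             admB P (path t s) (ctl t s) &
             is_derive s (1 : R) (path t) (dynD P (path t s) (ctl t s))]) &
      (@lebesgue_measure R).-integrable `[0, dur t]
        (fun s => (integrand P t s)%:E)].

Definition cost (P : opt_problem) (t : traj) : R :=
  Rintegral (@lebesgue_measure R) `[0, dur t] (integrand P t)
  + termPhi P (path t (dur t)).

(* Solutions of P_cbar (cbar : option R, None standing for +oo):
   exactly the feasible trajectories of P with cost <= cbar. *)
Definition solves_bounded (P : opt_problem) (cbar : option R) (t : traj) : Prop :=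
  feasible P t /\ (if cbar is Some c then cost P t <= c else True).

(* A planner, as used on the problems P_cbar: it always terminates (is a
   total function) and returns a solution or reports failure (None). *)
Definition planner := option R -> option traj.

Definition complete_planner (P : opt_problem) (A : planner) : Prop :=
  forall cbar, match A cbar with
               | Some t => solves_bounded P cbar t
               | None => ~ exists t, solves_bounded P cbar t
               end.

(* Bounded-Suboptimal(P, eps, A): run i is the result of the i-th call to A
   (call 0 on P_oo, call i+1 on P_{c_i - eps}); the procedure stops at the
   first call returning None. *)
Fixpoint bs_run (P : opt_problem) (eps : R) (A : planner) (i : nat) : option traj :=
  match i with
  | O => A None
  | S k => match bs_run P eps A k with
           | Some y => A (Some (cost P y - eps))
           | None => None
           end
  end.

End Planning.

(* Main.v *)
Require Import Defs.
From HB Require Import structures.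
From mathcomp Require Import all_boot all_order all_algebra.
From mathcomp Require Import all_classical all_reals all_analysis.
From mathcomp Require Import lra.
Import Order.TTheory GRing.Theory Num.Theory.
Import numFieldNormedType.Exports.
Local Open Scope classical_set_scope.
Local Open Scope ring_scope.

Theorem theorem2 (R : realType) (X : normedModType R) (U : Type)
  (P : opt_problem X U) (eps : R) (A : planner X U) :
  (exists ystar, feasible P ystar /\
     forall y, feasible P y -> cost P ystar <= cost P y) ->
  0 < eps ->
  complete_planner P A ->
  exists (n : nat) (y : traj X U),
    [/\ bs_run P eps A n = Some y,
        bs_run P eps A n.+1 = None &
        forall ystar, feasible P ystar ->
          (forall y', feasible P y' -> cost P ystar <= cost P y') ->
          cost P y <= cost P ystar + eps].
Proof.
move=> [ys [fys ys_opt]] eps0 Acomp.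
have H0 := Acomp None.
case E0: (A None) H0 => [y0|] H0; last first.
  by exfalso; apply: H0; exists ys; split.
set c0 := cost P y0.
have key : forall k : nat,
  (exists n y, bs_run P eps A n = Some y /\ bs_run P eps A n.+1 = None) \/
  (exists y, bs_run P eps A k = Some y /\ feasible P y /\
             cost P y <= c0 - k%:R * eps).
  elim=> [|k IH].
    right; exists y0; split; first by rewrite /= E0.
    by case: H0 => fy0 _; split => //; rewrite mul0r subr0.
  case: IH => [L|[y [Ey [fy cy]]]]; first by left.
  have Hk := Acomp (Some (cost P y - eps)).
  case Ek: (A (Some (cost P y - eps))) Hk => [y'|] Hk.
    right; exists y'; split; first by rewrite /= Ey Ek.
    case: Hk => fy' cy'; split => //.
    rewrite -natr1 mulrDl mul1r; lra.
  by left; exists k, y; split => //; rewrite /= Ey Ek.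
set k := Num.Def.archi_bound ((c0 - cost P ys) / eps).
case: (key k) => [[n [y [En En1]]]|[y [_ [fy cy]]]]; last first.
  exfalso.
  have h1 := ys_opt y fy.
  have h2 : (c0 - cost P ys) / eps < k%:R.
    apply: unstable.ltr_bound.
  have h3 : c0 - cost P ys < k%:R * eps.
    by rewrite -ltr_pdivrMr.
  lra.
exists n, y; split => // ys' fys' ys'_opt.
have Hn : A (Some (cost P y - eps)) = None.
  by move: En1; rewrite /= En.
have Hc := Acomp (Some (cost P y - eps)); rewrite Hn in Hc.
case: (lerP (cost P y) (cost P ys' + eps)) => // hlt.
exfalso; apply: Hc; exists ys'; split => //; lra.
Qed.
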